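(* Let $K$ be a field with $\operatorname{char}(K)\neq2$ and let $(C_1,C_0,s,t,e,k,(\tau,\psi))$ be a braided categorical Leibniz $K$-algebra. Then $(\ker(s),C_0,({}^e\cdot,\cdot^e),\partial_t,(\{-,-\}_\tau,\langle-,-\rangle_\psi))$ is a braided crossed module of Leibniz $K$-algebras, where for $a,b\in C_0$, $x\in\ker(s)$: $a\,{}^e\cdot\,x=[e(a),x]$, $x\cdot^e a=[x,e(a)]$, $\partial_t=t|_{\ker(s)}$, $\{a,b\}_\tau=\frac{e([a,b])-\tau_{a,b}}{2}$ and $\langle a,b\rangle_\psi=\frac{e([a,b])-\psi_{a,b}}{2}$.
   Context: A Leibniz $K$-algebra: bilinear bracket with $[x,[y,z]]=[[x,y],z]-[[x,z],y]$. Categorical Leibniz algebra $(C_1,C_0,s,t,e,k)$: Leibniz homomorphisms $s,t\colon C_1\to C_0$, $e\colon C_0\to C_1$, $k\colon C_1\times_{C_0}C_1=\{(x,y):t(x)=s(y)\}\to C_1$ forming an internal category ($se=te=\mathrm{Id}$, $sk(x,y)=s(x)$, $tk(x,y)=t(y)$, $k(es(x),x)=x=k(x,et(x))$, $k$ associative). Braiding on it: bilinear $\tau,\psi\colon C_0\times C_0\to C_1$ with, for all $a,b,c\in C_0$, $x,y\in C_1$: $s(\tau_{a,b})=s(\psi_{a,b})=[a,b]$, $t(\tau_{a,b})=t(\psi_{a,b})=-[a,b]$; $k([x,y],\tau_{t(x),t(y)})=k(\tau_{s(x),s(y)},-[x,y])$ and likewise for $\psi$; $\tau_{a,[b,c]}=\tau_{[a,b],c}-\tau_{[a,c],b}$;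 $\psi_{a,[b,c]}=\tau_{[a,b],c}-\psi_{[a,c],b}$; $\tau_{a,[b,c]}=\tau_{[a,b],c}-\psi_{[a,c],b}$; $\psi_{a,[b,c]}=\psi_{[a,b],c}-\psi_{[a,c],b}$. Leibniz action of $N$ on $M$: bilinear $\cdot_1\colon N\times M\to M$, $\cdot_2\colon M\times N\to M$ with $n\cdot_1[m,m']=[n\cdot_1m,m']-[n\cdot_1m',m]$; $[m,n\cdot_1m']=[m\cdot_2n,m']-[m,m']\cdot_2n$; $[m,m'\cdot_2n]=[m,m']\cdot_2n-[m\cdot_2n,m']$; $m\cdot_2[n,n']=(m\cdot_2n)\cdot_2n'-(m\cdot_2n')\cdot_2n$; $n\cdot_1(m\cdot_2n')=(n\cdot_1m)\cdot_2n'-[n,n']\cdot_1m$; $n\cdot_1(n'\cdot_1m)=[n,n']\cdot_1m-(n\cdot_1m)\cdot_2n'$. Crossed module $(M,N,(\cdot_1,\cdot_2),\partial)$: such an action with Leibniz homomorphism $\partial\colon M\to N$, $\partial(n\cdot_1m)=[n,\partial m]$, $\partial(m\cdot_2n)=[\partial m,n]$, $\partial(m)\cdot_1m'=[m,m']=m\cdot_2\partial(m')$. Braiding on it: bilinear $\{-,-\},\langle-,-\rangle\colon N\times N\to M$ with $\partial\{n,n'\}=[n,n']=\partial\langle n,n'\rangle$; $\{\partial m,\partial m'\}=[m,m']=\langle\partial m,\partial m'\rangle$; $\{\partial m,n\}=m\cdot_2n=\langle\partial m,n\rangle$; $\{n,\partial m\}=n\cdot_1m=\langle n,\partial m\rangle$;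 $\{n,[n',n'']\}=\{[n,n'],n''\}-\{[n,n''],n'\}$; $\langle n,[n',n'']\rangle=\{[n,n'],n''\}-\langle[n,n''],n'\rangle$; $\{n,[n',n'']\}=\{[n,n'],n''\}-\langle[n,n''],n'\rangle$; $\langle n,[n',n'']\rangle=\langle[n,n'],n''\rangle-\langle[n,n''],n'\rangle$. *)

(* Defs.v *)
From HB Require Import structures.
From mathcomp Require Import all_boot all_algebra.
Set Implicit Arguments. Unset Strict Implicit. Unset Printing Implicit Defensive.
Import GRing.Theory.
Local Open Scope ring_scope.

Definition bilinear_op (K : fieldType) (U V W : lmodType K) (f : U -> V -> W) : Prop :=
  (forall (a : K) x y z, f (a *: x + y) z = a *: f x z + f y z) /\
  (forall (a : K) x y z, f x (a *: y + z) = a *: f x y + f x z).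

Definition leibniz_alg (K : fieldType) (V : lmodType K) (br : V -> V -> V) : Prop :=
  bilinear_op br /\
  forall x y z, br x (br y z) = br (br x y) z - br (br x z) y.

Definition leibniz_hom (K : fieldType) (U V : lmodType K)
  (brU : U -> U -> U) (brV : V -> V -> V) (f : {linear U -> V}) : Prop :=
  forall x y, f (brU x y) = brV (f x) (f y).

(* The composition k is
   defined on the pullback C1 x_{C0} C1 = {(x,y) | t x = s y}; we model it as a
   function C1 -> C1 -> C1 whose values are only constrained on composable
   pairs, and require it to be a Leibniz homomorphism on that subalgebra. *)
Record cat_leibniz (K : fieldType) (C1 C0 : lmodType K)
  (br1 : C1 -> C1 -> C1) (br0 : C0 -> C0 -> C0)
  (s t : {linear C1 -> C0}) (e : {linear C0 -> C1}) (k : C1 -> C1 -> C1) : Prop := {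
  cl_alg1 : leibniz_alg br1;
  cl_alg0 : leibniz_alg br0;
  cl_s_hom : leibniz_hom br1 br0 s;
  cl_t_hom : leibniz_hom br1 br0 t;
  cl_e_hom : leibniz_hom br0 br1 e;
  cl_k_lin : forall (a : K) x y x' y', t x = s y -> t x' = s y' ->
               k (a *: x + x') (a *: y + y') = a *: k x y + k x' y';
  cl_k_br : forall x y x' y', t x = s y -> t x' = s y' ->
               k (br1 x x') (br1 y y') = br1 (k x y) (k x' y');
  cl_se : forall a, s (e a) = a;
  cl_te : forall a, t (e a) = a;
  cl_sk : forall x y, t x = s y -> s (k x y) = s x;
  cl_tk : forall x y, t x = s y -> t (k x y) = t y;
  cl_kl : forall x, k (e (s x)) x = x;
  cl_kr : forall x, k x (e (t x)) = x;
  cl_kassoc : forall x y z, t x = s y -> t y = s z -> k (k x y) z = k x (k y z)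
}.

Record cat_braiding (K : fieldType) (C1 C0 : lmodType K)
  (br1 : C1 -> C1 -> C1) (br0 : C0 -> C0 -> C0)
  (s t : {linear C1 -> C0}) (e : {linear C0 -> C1}) (k : C1 -> C1 -> C1)
  (tau psi : C0 -> C0 -> C1) : Prop := {
  cb_tau_bil : bilinear_op tau;
  cb_psi_bil : bilinear_op psi;
  cb_s_tau : forall a b, s (tau a b) = br0 a b;
  cb_s_psi : forall a b, s (psi a b) = br0 a b;
  cb_t_tau : forall a b, t (tau a b) = - br0 a b;
  cb_t_psi : forall a b, t (psi a b) = - br0 a b;
  cb_nat_tau : forall x y, k (br1 x y) (tau (t x) (t y)) = k (tau (s x) (s y)) (- br1 x y);
  cb_nat_psi : forall x y, k (br1 x y) (psi (t x) (t y)) = k (psi (s x) (s y)) (- br1 x y);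
  cb_1 : forall a b c, tau a (br0 b c) = tau (br0 a b) c - tau (br0 a c) b;
  cb_2 : forall a b c, psi a (br0 b c) = tau (br0 a b) c - psi (br0 a c) b;
  cb_3 : forall a b c, tau a (br0 b c) = tau (br0 a b) c - psi (br0 a c) b;
  cb_4 : forall a b c, psi a (br0 b c) = psi (br0 a b) c - psi (br0 a c) b
}.

Definition braided_cat_leibniz (K : fieldType) (C1 C0 : lmodType K)
  br1 br0 s t e k tau psi : Prop :=
  @cat_leibniz K C1 C0 br1 br0 s t e k /\ @cat_braiding K C1 C0 br1 br0 s t e k tau psi.

Record leibniz_action (K : fieldType) (M N : lmodType K)
  (brM : M -> M -> M) (brN : N -> N -> N)
  (act1 : N -> M -> M) (act2 : M -> N -> M) : Prop := {
  la_bil1 : bilinear_op act1;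
  la_bil2 : bilinear_op act2;
  la_1 : forall n m m', act1 n (brM m m') = brM (act1 n m) m' - brM (act1 n m') m;
  la_2 : forall n m m', brM m (act1 n m') = brM (act2 m n) m' - act2 (brM m m') n;
  la_3 : forall n m m', brM m (act2 m' n) = act2 (brM m m') n - brM (act2 m n) m';
  la_4 : forall m n n', act2 m (brN n n') = act2 (act2 m n) n' - act2 (act2 m n') n;
  la_5 : forall n n' m, act1 n (act2 m n') = act2 (act1 n m) n' - act1 (brN n n') m;
  la_6 : forall n n' m, act1 n (act1 n' m) = act1 (brN n n') m - act2 (act1 n m) n'
}.

Record crossed_module (K : fieldType) (M N : lmodType K)
  (brM : M -> M -> M) (brN : N -> N -> N)
  (act1 : N -> M -> M) (act2 : M -> N -> M) (d : {linear M -> N}) : Prop := {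
  cm_algM : leibniz_alg brM;
  cm_algN : leibniz_alg brN;
  cm_action : leibniz_action brM brN act1 act2;
  cm_d_hom : leibniz_hom brM brN d;
  cm_d_act1 : forall n m, d (act1 n m) = brN n (d m);
  cm_d_act2 : forall m n, d (act2 m n) = brN (d m) n;
  cm_peiffer1 : forall m m', act1 (d m) m' = brM m m';
  cm_peiffer2 : forall m m', act2 m (d m') = brM m m'
}.

Record cm_braiding (K : fieldType) (M N : lmodType K)
  (brM : M -> M -> M) (brN : N -> N -> N)
  (act1 : N -> M -> M) (act2 : M -> N -> M) (d : {linear M -> N})
  (brace angle : N -> N -> M) : Prop := {
  cmb_bil1 : bilinear_op brace;
  cmb_bil2 : bilinear_op angle;
  cmb_d1 : forall n n', d (brace n n') = brN n n';
  cmb_d2 : forall n n', d (angle n n') = brN n n';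
  cmb_dd1 : forall m m', brace (d m) (d m') = brM m m';
  cmb_dd2 : forall m m', angle (d m) (d m') = brM m m';
  cmb_l1 : forall m n, brace (d m) n = act2 m n;
  cmb_l2 : forall m n, angle (d m) n = act2 m n;
  cmb_r1 : forall n m, brace n (d m) = act1 n m;
  cmb_r2 : forall n m, angle n (d m) = act1 n m;
  cmb_1 : forall n n' n'', brace n (brN n' n'') = brace (brN n n') n'' - brace (brN n n'') n';
  cmb_2 : forall n n' n'', angle n (brN n' n'') = brace (brN n n') n'' - angle (brN n n'') n';
  cmb_3 : forall n n' n'', brace n (brN n' n'') = brace (brN n n') n'' - angle (brN n n'') n';
  cmb_4 : forall n n' n'', angle n (brN n' n'') = angle (brN n n') n'' - angle (brN n n'') n'
}.

Definition braided_crossed_module (K : fieldType) (M N : lmodType K)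
  brM brN act1 act2 d brace angle : Prop :=
  @crossed_module K M N brM brN act1 act2 d /\
  @cm_braiding K M N brM brN act1 act2 d brace angle.

Section Kernel.
Variables (K : fieldType) (C1 C0 : lmodType K) (s : {linear C1 -> C0}).

Definition ker_pred : {pred C1} := fun x => s x == 0.

Fact ker_submod_closed : submod_closed ker_pred.
Proof.
split; first by rewrite /ker_pred unfold_in /= linear0.
by move=> a x y; rewrite /ker_pred !unfold_in /= linearP => /eqP -> /eqP ->; rewrite scaler0 addr0.
Qed.

HB.instance Definition _ := GRing.isSubmodClosed.Build K C1 ker_pred ker_submod_closed.

Record kerT := KerT { kerval :> C1; _ : kerval \in ker_pred }.
HB.instance Definition _ := [isSub for kerval].
HB.instance Definition _ := [Choice of kerT by <:].
HB.instance Definition _ := [SubChoice_isSubLmodule of kerT by <:].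

Definition ker_restr (f : {linear C1 -> C0}) (x : kerT) : C0 := f (val x).
Fact ker_restr_linear f : linear (ker_restr f).
Proof. by move=> a x y; rewrite /ker_restr /= linearP. Qed.
HB.instance Definition _ f := GRing.isLinear.Build K kerT C0 _ (ker_restr f) (ker_restr_linear f).
End Kernel.

(* Values in C1 are cast into ker s via insubd 0; under the
   hypotheses of the theorem these values do lie in ker s, so insubd is
   just the corestriction. *)
Section Induced.
Variables (K : fieldType) (C1 C0 : lmodType K) (br1 : C1 -> C1 -> C1)
  (s : {linear C1 -> C0}) (e : {linear C0 -> C1}).

Definition ker_br (x y : kerT s) : kerT s := insubd 0 (br1 (val x) (val y)).
Definition e_act1 (a : C0) (x : kerT s) : kerT s := insubd 0 (br1 (e a) (val x)).
Definition e_act2 (x : kerT s) (a : C0) : kerT s := insubd 0 (br1 (val x) (e a)).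
Definition half_braid (br0 : C0 -> C0 -> C0) (tau : C0 -> C0 -> C1) (a b : C0) : kerT s :=
  insubd 0 ((2%:R : K)^-1 *: (e (br0 a b) - tau a b)).
End Induced.

(* Main.v *)
Require Import Defs.
From HB Require Import structures.
From mathcomp Require Import all_boot all_algebra.
Import GRing.Theory.
Local Open Scope ring_scope.
Set Implicit Arguments.

Lemma two_neq0 (K : fieldType) : 2 \notin [pchar K] -> (2%:R : K) != 0.
Proof. by rewrite inE /=. Qed.

Section B.
Variables (K : fieldType) (U V W : lmodType K) (f : U -> V -> W).
Hypothesis hf : bilinear_op f.
Lemma bil0l z : f 0 z = 0.
Proof. have := hf.1 1 0 0 z. rewrite !scale1r addr0 => h. by have := congr1 (fun w => w - f 0 z) h; rewrite addrK subrr => /esym. Qed.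
Lemma bil0r z : f z 0 = 0.
Proof. have := hf.2 1 z 0 0. rewrite !scale1r addr0 => h. by have := congr1 (fun w => w - f z 0) h; rewrite addrK subrr => /esym. Qed.
Lemma bilDl x y z : f (x + y) z = f x z + f y z.
Proof. by have := hf.1 1 x y z; rewrite !scale1r. Qed.
Lemma bilDr x y z : f z (x + y) = f z x + f z y.
Proof. by have := hf.2 1 z x y; rewrite !scale1r. Qed.
Lemma bilZl a x z : f (a *: x) z = a *: f x z.
Proof. by have := hf.1 a x 0 z; rewrite !addr0 bil0l addr0. Qed.
Lemma bilZr a x z : f z (a *: x) = a *: f z x.
Proof. by have := hf.2 a z x 0; rewrite !addr0 bil0r addr0. Qed.
Lemma bilNl x z : f (- x) z = - f x z.
Proof. by rewrite -scaleN1r bilZl scaleN1r. Qed.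
Lemma bilNr x z : f z (- x) = - f z x.
Proof. by rewrite -scaleN1r bilZr scaleN1r. Qed.
Lemma bilBl x y z : f (x - y) z = f x z - f y z.
Proof. by rewrite bilDl bilNl. Qed.
Lemma bilBr x y z : f z (x - y) = f z x - f z y.
Proof. by rewrite bilDr bilNr. Qed.
End B.

Lemma kerP (K : fieldType) (C1 C0 : lmodType K) (s : {linear C1 -> C0}) x :
  s x = 0 -> val (insubd 0 x : kerT s) = x.
Proof. by move=> h; rewrite insubdK // /in_mem /= /ker_pred h eqxx. Qed.

Lemma kerS (K : fieldType) (C1 C0 : lmodType K) (s : {linear C1 -> C0}) (m : kerT s) :
  s (val m) = 0.
Proof. case: m => x /=. rewrite /in_mem /= /ker_pred. by move/eqP. Qed.

Lemma aux1 (V : zmodType) (a b c : V) : a + b - c = - a -> c - b = a *+ 2.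
Proof.
move/eqP; rewrite subr_eq => /eqP H.
have -> : c = a + b + a by rewrite H addrC addNKr.
by rewrite addrAC addrK mulr2n.
Qed.

Lemma aux2 (V : zmodType) (a b c d : V) : a - b - (c - d) = a - c - (b - d).
Proof. by rewrite !opprB !addrA addrAC [in RHS]addrAC [a - b - c]addrAC. Qed.

Theorem mainTheorem4 (K : fieldType) (C1 C0 : lmodType K)
  (br1 : C1 -> C1 -> C1) (br0 : C0 -> C0 -> C0)
  (s t : {linear C1 -> C0}) (e : {linear C0 -> C1}) (k : C1 -> C1 -> C1)
  (tau psi : C0 -> C0 -> C1) :
  2 \notin [pchar K] ->
  braided_cat_leibniz br1 br0 s t e k tau psi ->
  braided_crossed_module (@ker_br K C1 C0 br1 s) br0
    (@e_act1 K C1 C0 br1 s e) (@e_act2 K C1 C0 br1 s e) (@ker_restr K C1 C0 s t)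
    (@half_braid K C1 C0 s e br0 tau) (@half_braid K C1 C0 s e br0 psi).
Proof.
move=> h2 [[[bil1 L1] [bil0 L0] shom thom ehom klin kbr se te sk tk kl kr kas]
           [tbil pbil stau spsi ttau tpsi ntau npsi c1 c2 c3 c4]].
have two : (2%:R : K) != 0 by exact: two_neq0.
have half : forall (V : lmodType K) (v : V), (2%:R : K)^-1 *: (v *+ 2) = v.
  by move=> V v; rewrite -scaler_nat scalerA mulVf // scale1r.
have sbr : forall x y, s x = 0 \/ s y = 0 -> s (br1 x y) = 0.
  by move=> x y [h|h]; rewrite shom h ?(bil0l bil0) ?(bil0r bil0).
have brv : forall x y : kerT s, kerval (ker_br br1 x y) = br1 (kerval x) (kerval y).
  by move=> x y; rewrite /ker_br kerP // sbr // kerS; left.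
have a1v : forall a (x : kerT s), kerval (e_act1 br1 e a x) = br1 (e a) (kerval x).
  by move=> a x; rewrite /e_act1 kerP // sbr // kerS; right.
have a2v : forall a (x : kerT s), kerval (e_act2 br1 e x a) = br1 (kerval x) (e a).
  by move=> a x; rewrite /e_act2 kerP // sbr // kerS; left.
have hbv : forall (f : C0 -> C0 -> C1), (forall a b, s (f a b) = br0 a b) ->
    forall a b, kerval (half_braid s e br0 f a b) = (2%:R : K)^-1 *: (e (br0 a b) - f a b).
  by move=> f hf a b; rewrite /half_braid kerP // linearZ linearB /= se hf subrr scaler0.
have hbt := hbv tau stau; have hbp := hbv psi spsi.
have kform : forall x y, t x = s y -> k x y = x + y - e (t x).
  move=> x y hxy.
  have -> : k x y = k (1 *: x + 0) (1 *: e (t x) + (y - e (t x))).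
    by rewrite !scale1r addr0 addrC subrK.
  have h0 : s (y - e (t x)) = 0 by rewrite linearB /= se hxy subrr.
  rewrite klin; last by rewrite linear0 h0.
    rewrite scale1r kr.
    have := kl (y - e (t x)); rewrite h0 linear0 => ->.
    by rewrite addrA.
  by rewrite se.
have comm1 : forall x y, t x = 0 -> s y = 0 -> br1 x y = 0.
  move=> x y hx hy.
  have := kbr x 0 0 y; rewrite hx hy !linear0 => /(_ erefl erefl).
  rewrite (bil0r bil1) (bil0l bil1).
  rewrite (kform 0 0) ?linear0 // (kform x 0) ?linear0 // (kform 0 y) ?linear0 //.
  by rewrite hx !linear0 ?oppr0 !addr0 ?add0r => <-.
have comm2 : forall x y, t x = 0 -> s y = 0 -> br1 y x = 0.
  move=> x y hx hy.
  have := kbr 0 y x 0; rewrite hx hy !linear0 => /(_ erefl erefl).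
  rewrite (bil0r bil1) (bil0l bil1).
  rewrite (kform 0 0) ?linear0 // (kform x 0) ?linear0 // (kform 0 y) ?linear0 //.
  by rewrite hx !linear0 ?oppr0 !addr0 ?add0r => <-.
have natgen : forall f : C0 -> C0 -> C1, (forall a b, s (f a b) = br0 a b) ->
  (forall x y, k (br1 x y) (f (t x) (t y)) = k (f (s x) (s y)) (- br1 x y)) ->
  forall x y, f (s x) (s y) = 0 -> s (br1 x y) = 0 ->
  e (br0 (t x) (t y)) - f (t x) (t y) = br1 x y *+ 2.
  move=> f sf nf x y h0 hs.
  have := nf x y; rewrite h0.
  rewrite (kform (br1 x y)) ?thom ?sf // (kform 0) ?linear0 ?linearN ?hs ?oppr0 //.
  rewrite ?oppr0 ?addr0 add0r; exact: aux1.
have dv : forall m : kerT s, ker_restr t m = t (kerval m) by [].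
have hbil : forall f : C0 -> C0 -> C1, bilinear_op f -> (forall a b, s (f a b) = br0 a b) ->
    bilinear_op (half_braid s e br0 f).
  move=> f fb sf; split=> a x y z; apply: val_inj => /=;
    rewrite !(hbv f sf, linearP) /= ?(fb.1, fb.2, bil0.1, bil0.2) linearP;
    rewrite scalerA mulrC -scalerA -scalerDr; congr (_ *: _);
    by rewrite opprD addrACA scalerBr.
split; split.
- split; first split.
  + by move=> a x y z; apply: val_inj => /=; rewrite !(brv, linearP) /=; exact: bil1.1.
  + by move=> a x y z; apply: val_inj => /=; rewrite !(brv, linearP) /=; exact: bil1.2.
  + by move=> x y z; apply: val_inj => /=; rewrite !(brv, linearB) /=; exact: L1.
- by split.
- split.
  + split=> a x y z; apply: val_inj => /=; rewrite !(a1v, linearP) /=.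
      exact: bil1.1.
    exact: bil1.2.
  + split=> a x y z; apply: val_inj => /=; rewrite !(a2v, linearP) /=.
      exact: bil1.1.
    exact: bil1.2.
  + by move=> n m m'; apply: val_inj => /=; rewrite !(brv, a1v, a2v, linearB) /=; exact: L1.
  + by move=> n m m'; apply: val_inj => /=; rewrite !(brv, a1v, a2v, linearB) /=; exact: L1.
  + by move=> n m m'; apply: val_inj => /=; rewrite !(brv, a1v, a2v, linearB) /=; exact: L1.
  + by move=> n m m'; apply: val_inj => /=; rewrite !(brv, a1v, a2v, linearB) /= ehom; exact: L1.
  + by move=> n m m'; apply: val_inj => /=; rewrite !(brv, a1v, a2v, linearB) /= ehom; exact: L1.
  + by move=> n m m'; apply: val_inj => /=; rewrite !(brv, a1v, a2v, linearB) /= ehom; exact: L1.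
- by move=> x y; rewrite /= !dv brv thom.
- by move=> n m; rewrite /= dv a1v thom te.
- by move=> m n; rewrite /= dv a2v thom te.
- move=> m m'; apply: val_inj => /=; rewrite a1v brv dv.
  apply/eqP; rewrite -subr_eq0 -(bilBl bil1); apply/eqP; apply: comm1.
    by rewrite linearB /= te subrr.
  exact: kerS.
- move=> m m'; apply: val_inj => /=; rewrite a2v brv dv.
  apply/eqP; rewrite -subr_eq0 -(bilBr bil1); apply/eqP; apply: comm2.
    by rewrite linearB /= te subrr.
  exact: kerS.
- exact: hbil.
- exact: hbil.
- by move=> n n'; rewrite /= dv hbt linearZ linearB /= te ttau opprK -mulr2n half.
- by move=> n n'; rewrite /= dv hbp linearZ linearB /= te tpsi opprK -mulr2n half.
- move=> m m'; apply: val_inj => /=; rewrite hbt brv !dv.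
  have := natgen tau stau ntau (kerval m) (kerval m'); rewrite !kerS (bil0l tbil) => /(_ erefl).
  by move=> /(_ (sbr _ _ (or_introl (kerS m)))) ->; rewrite half.
- move=> m m'; apply: val_inj => /=; rewrite hbp brv !dv.
  have := natgen psi spsi npsi (kerval m) (kerval m'); rewrite !kerS (bil0l pbil) => /(_ erefl).
  by move=> /(_ (sbr _ _ (or_introl (kerS m)))) ->; rewrite half.
- move=> m n; apply: val_inj => /=; rewrite hbt a2v !dv.
  have := natgen tau stau ntau (kerval m) (e n); rewrite te se kerS (bil0l tbil) => /(_ erefl).
  by move=> /(_ (sbr _ _ (or_introl (kerS m)))) ->; rewrite half.
- move=> m n; apply: val_inj => /=; rewrite hbp a2v !dv.
  have := natgen psi spsi npsi (kerval m) (e n); rewrite te se kerS (bil0l pbil) => /(_ erefl).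
  by move=> /(_ (sbr _ _ (or_introl (kerS m)))) ->; rewrite half.
- move=> n m; apply: val_inj => /=; rewrite hbt a1v !dv.
  have := natgen tau stau ntau (e n) (kerval m); rewrite te se kerS (bil0r tbil) => /(_ erefl).
  by move=> /(_ (sbr _ _ (or_intror (kerS m)))) ->; rewrite half.
- move=> n m; apply: val_inj => /=; rewrite hbp a1v !dv.
  have := natgen psi spsi npsi (e n) (kerval m); rewrite te se kerS (bil0r pbil) => /(_ erefl).
  by move=> /(_ (sbr _ _ (or_intror (kerS m)))) ->; rewrite half.
- move=> n n' n''; apply: val_inj => /=; rewrite !(hbt, hbp) L0 c1 (linearB e) -scalerBr.
  by congr (_ *: _); exact: aux2.
- move=> n n' n''; apply: val_inj => /=; rewrite !(hbt, hbp) L0 c2 (linearB e) -scalerBr.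
  by congr (_ *: _); exact: aux2.
- move=> n n' n''; apply: val_inj => /=; rewrite !(hbt, hbp) L0 c3 (linearB e) -scalerBr.
  by congr (_ *: _); exact: aux2.
- move=> n n' n''; apply: val_inj => /=; rewrite !(hbt, hbp) L0 c4 (linearB e) -scalerBr.
  by congr (_ *: _); exact: aux2.
Qed.
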